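(* Let $X$ be a compact metric space whose metric $d$ is an ultrametric, i.e. $d(x,z)\le\max\{d(x,y),d(y,z)\}$ for all $x,y,z\in X$. If a continuous map $f\colon X\to X$ has the contractive shadowing property, then $CR(f)=\overline{Per(f)}$.
   Context: For $\delta>0$, a sequence $(x_i)_{i\ge0}$ is a $\delta$-pseudo orbit of $f$ if $d(f(x_i),x_{i+1})\le\delta$ for all $i\ge0$; it is $\epsilon$-shadowed by $x$ if $d(f^i(x),x_i)\le\epsilon$ for all $i\ge0$. $f$ has the contractive shadowing property if there are $0<L<1$ and $\delta_0>0$ such that for every $0<\delta\le\delta_0$, every $\delta$-pseudo orbit of $f$ is $L\delta$-shadowed by some point of $X$. A $\delta$-chain is a finite sequence $(x_i)_{i=0}^k$, $k\ge1$, with $d(f(x_i),x_{i+1})\le\delta$ for $0\le i\le k-1$; a $\delta$-cycle is a $\delta$-chain with $x_0=x_k$. $CR(f)$ is the set of $x\in X$ such that for every $\delta>0$ there is a $\delta$-cycle with $x_0=x_k=x$. $Per(f)=\bigcup_{i>0}\{x: f^i(x)=x\}$. *)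

(* Defs.v *)
From Stdlib Require Import Reals List.
Open Scope R_scope.

Record is_metric {X : Type} (d : X -> X -> R) : Prop := {
  metric_nonneg : forall x y, 0 <= d x y;
  metric_eq0 : forall x y, d x y = 0 <-> x = y;
  metric_sym : forall x y, d x y = d y x;
  metric_triangle : forall x y z, d x z <= d x y + d y z }.

Definition is_ultrametric {X : Type} (d : X -> X -> R) : Prop :=
  forall x y z, d x z <= Rmax (d x y) (d y z).

Definition m_open {X : Type} (d : X -> X -> R) (U : X -> Prop) : Prop :=
  forall x, U x -> exists r, 0 < r /\ forall y, d x y < r -> U y.

Definition m_compact {X : Type} (d : X -> X -> R) : Prop :=
  forall (I : Type) (U : I -> X -> Prop),
    (forall i, m_open d (U i)) ->
    (forall x, exists i, U i x) ->
    exists l : list I, forall x, exists i, In i l /\ U i x.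

Definition m_continuous {X : Type} (d : X -> X -> R) (f : X -> X) : Prop :=
  forall x eps, 0 < eps -> exists del, 0 < del /\
    forall y, d x y < del -> d (f x) (f y) < eps.

Definition pseudo_orbit {X : Type} (d : X -> X -> R) (f : X -> X)
  (delta : R) (xs : nat -> X) : Prop :=
  forall i, d (f (xs i)) (xs (S i)) <= delta.

Definition shadowed {X : Type} (d : X -> X -> R) (f : X -> X)
  (eps : R) (xs : nat -> X) (x : X) : Prop :=
  forall i, d (Nat.iter i f x) (xs i) <= eps.

Definition contractive_shadowing {X : Type} (d : X -> X -> R) (f : X -> X) : Prop :=
  exists L delta0, 0 < L /\ L < 1 /\ 0 < delta0 /\
    forall delta, 0 < delta -> delta <= delta0 ->
      forall xs, pseudo_orbit d f delta xs ->
        exists x, shadowed d f (L * delta) xs x.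

(* a delta-chain (x_0,...,x_k), k >= 1, encoded by a sequence and its length k *)
Definition delta_chain {X : Type} (d : X -> X -> R) (f : X -> X)
  (delta : R) (xs : nat -> X) (k : nat) : Prop :=
  (1 <= k)%nat /\ forall i, (i < k)%nat -> d (f (xs i)) (xs (S i)) <= delta.

Definition chain_recurrent {X : Type} (d : X -> X -> R) (f : X -> X) (x : X) : Prop :=
  forall delta, 0 < delta -> exists xs k,
    delta_chain d f delta xs k /\ xs 0%nat = x /\ xs k = x.

Definition periodic {X : Type} (f : X -> X) (x : X) : Prop :=
  exists i, (0 < i)%nat /\ Nat.iter i f x = x.

Definition m_closure {X : Type} (d : X -> X -> R) (A : X -> Prop) (x : X) : Prop :=
  forall eps, 0 < eps -> exists y, A y /\ d x y < eps.

(* Main.v *)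
Require Import Defs.
From Stdlib Require Import Reals.
From Stdlib Require Import Lra Lia List Arith.
Open Scope R_scope.
From Stdlib Require Import Classical.

Lemma iter_cont (X : Type) (d : X -> X -> R) (f : X -> X) :
  m_continuous d f -> forall n x eps, 0 < eps -> exists del, 0 < del /\
    forall y, d x y < del -> d (Nat.iter n f x) (Nat.iter n f y) < eps.
Proof.
  intros Hc n; induction n as [|n IH]; intros x eps He.
  - exists eps; split; auto.
  - destruct (Hc (Nat.iter n f x) eps He) as [eta [He1 He2]].
    destruct (IH x eta He1) as [del [Hd1 Hd2]].
    exists del; split; auto. intros y Hy. simpl. apply He2. auto.
Qed.

Lemma mod_step (i k : nat) : k <> 0%nat ->
  ((S (i mod k) < k)%nat /\ ((S i) mod k = S (i mod k))%nat) \/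
  ((S (i mod k))%nat = k /\ ((S i) mod k)%nat = 0%nat).
Proof.
  intros Hk. pose proof (Nat.div_mod i k Hk) as E.
  pose proof (Nat.mod_upper_bound i k Hk) as B.
  set (q := (i / k)%nat) in *. set (j := (i mod k)%nat) in *.
  destruct (Nat.eq_dec (S j) k) as [e|n].
  - right; split; auto. symmetry. apply (Nat.mod_unique _ _ (S q)); [lia|].
    rewrite Nat.mul_succ_r. lia.
  - left; split; [lia|]. symmetry. apply (Nat.mod_unique _ _ q); lia.
Qed.

Lemma step_lemma (X : Type) (d : X -> X -> R) (f : X -> X) :
  is_metric d -> is_ultrametric d -> contractive_shadowing d f ->
  exists L delta0, 0 < L /\ L < 1 /\ 0 < delta0 /\
  forall (a : nat -> X) (k : nat) (delta : R), (1 <= k)%nat -> 0 < delta -> delta <= delta0 ->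
    (forall j, (S j < k)%nat -> d (f (a j)) (a (S j)) <= delta) ->
    d (f (a (k - 1)%nat)) (a 0%nat) <= delta ->
    exists y, d y (a 0%nat) <= L * delta /\ d (Nat.iter k f y) y <= L * delta.
Proof.
  intros Hm Hu [L [d0 [HL0 [HL1 [Hd0 Hs]]]]].
  exists L, d0; repeat split; auto.
  intros a k delta Hk Hd Hdd Hj Hl.
  assert (Hk0 : k <> 0%nat) by lia.
  destruct (Hs delta Hd Hdd (fun i => a (i mod k))) as [y Hy].
  - intros i. destruct (mod_step i k Hk0) as [[H1 H2]|[H1 H2]].
    + rewrite H2. apply Hj; auto.
    + rewrite H2. replace (i mod k) with (k - 1)%nat by lia. auto.
  - exists y. pose proof (Hy 0%nat) as H0. pose proof (Hy k) as Hk'.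
    cbv beta in H0, Hk'. simpl Nat.iter in H0. rewrite Nat.mod_0_l in H0 by auto.
    rewrite Nat.mod_same in Hk' by auto.
    split; auto.
    eapply Rle_trans; [apply Hu with (y := a 0%nat)|].
    apply Rmax_lub; auto. rewrite metric_sym by auto. auto.
Qed.

Theorem theorem1p5 (X : Type) (d : X -> X -> R) (f : X -> X) :
  is_metric d -> is_ultrametric d -> m_compact d -> m_continuous d f ->
  contractive_shadowing d f ->
  forall x, chain_recurrent d f x <-> m_closure d (periodic f) x.
Proof.
  intros Hm Hu Hcomp Hc Hsh x. split.
  - intros Hcr eps Heps.
    destruct (step_lemma X d f Hm Hu Hsh) as [L [d0 [HL0 [HL1 [Hd0 Hst]]]]].
    set (delta := Rmin d0 (eps / 2)).
    assert (Hdp : 0 < delta) by (unfold delta; apply Rmin_glb_lt; lra).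
    assert (Hdd0 : delta <= d0) by (unfold delta; apply Rmin_l).
    assert (Hde : delta <= eps / 2) by (unfold delta; apply Rmin_r).
    destruct (Hcr delta Hdp) as [xs [k [[Hk Hch] [Hx0 Hxk]]]].
    set (r := L * delta).
    set (g := fun z => d (Nat.iter k f z) z).
    assert (Hg0 : forall z, 0 <= g z) by (intros; apply metric_nonneg; auto).
    assert (Hdesc : forall n, exists z, d z x <= r /\ g z <= L ^ n * r).
    { induction n as [|n IH].
      - destruct (Hst xs k delta Hk Hdp Hdd0) as [y [Hy1 Hy2]].
        + intros j Hj. apply Hch. lia.
        + replace (xs 0%nat) with (xs (S (k - 1))) by (rewrite Hx0, <- Hxk; f_equal; lia).
          apply Hch. lia.
        + exists y. rewrite <- Hx0. split; auto. simpl. unfold g, r. lra.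
      - destruct IH as [z [Hz1 Hz2]].
        assert (HLn : L ^ n <= 1).
        { clear -HL0 HL1. induction n; simpl; [lra|]. 
          apply Rle_trans with (L * 1); [apply Rmult_le_compat_l; lra | lra]. }
        assert (Hgr : g z <= r).
        { eapply Rle_trans; [apply Hz2|]. unfold r.
          assert (0 <= L * delta) by (apply Rmult_le_pos; lra).
          rewrite <- (Rmult_1_l (L * delta)) at 2. apply Rmult_le_compat_r; lra. }
        assert (Hrd : r <= delta) by (unfold r; rewrite <- (Rmult_1_l delta) at 2;
                                      apply Rmult_le_compat_r; lra).
        destruct (Rle_lt_or_eq_dec 0 (g z) (Hg0 z)) as [Hpos|Hz0].
        + destruct (Hst (fun i => Nat.iter i f z) k (g z) Hk Hpos) as [y [Hy1 Hy2]].
          * lra.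
          * intros j Hj. simpl. rewrite (proj2 (metric_eq0 _ Hm _ _)) by auto. lra.
          * unfold g. simpl.
            assert (E : f (Nat.iter (k - 1) f z) = Nat.iter k f z).
            { clear -Hk. destruct k as [|k']; [lia|]. simpl. rewrite Nat.sub_0_r. reflexivity. }
            rewrite E. lra.
          * exists y. simpl in Hy1. split.
            -- eapply Rle_trans; [apply Hu with (y := z)|]. apply Rmax_lub; auto.
               eapply Rle_trans; [apply Hy1|]. unfold r.
               apply Rmult_le_compat_l; lra.
            -- fold (g y) in Hy2. eapply Rle_trans; [apply Hy2|]. simpl.
               rewrite Rmult_assoc. apply Rmult_le_compat_l; lra.
        + exists z. split; auto. rewrite <- Hz0.
          assert (0 <= L ^ S n) by (apply pow_le; lra).
          assert (0 <= r) by (unfold r; apply Rmult_le_pos; lra).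
          apply Rmult_le_pos; auto. }
    destruct (classic (exists z, d z x <= r /\ g z = 0)) as [[z [Hz1 Hz2]]|Hno].
    + exists z. split.
      * exists k. split; [lia|]. apply (metric_eq0 _ Hm). exact Hz2.
      * rewrite metric_sym by auto. unfold r in *.
        assert (L * delta < delta) by (rewrite <- (Rmult_1_l delta) at 2;
                                       apply Rmult_lt_compat_r; lra).
        lra.
    + exfalso.
      set (U := fun (n : nat) z => r < d z x \/ 1 < g z * INR (S n)).
      destruct (Hcomp nat U) as [l Hl].
      * intros n z Hz. destruct Hz as [Hz|Hz].
        -- exists (d z x - r). split; [lra|]. intros w Hw. left.
           pose proof (metric_triangle _ Hm z w x). lra.
        -- assert (HS : 0 < INR (S n)) by (apply lt_0_INR; lia).
           set (c := (g z - / INR (S n)) / 2).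
           assert (Hc0 : 0 < c).
           { unfold c. assert (/ INR (S n) < g z).
             { apply (Rmult_lt_reg_r (INR (S n))); auto.
               rewrite Rinv_l by lra. lra. }
             lra. }
           destruct (iter_cont X d f Hc k z c Hc0) as [eta [He1 He2]].
           exists (Rmin eta c). split; [apply Rmin_glb_lt; lra|].
           intros w Hw. right.
           assert (Hw1 : d z w < eta) by (eapply Rlt_le_trans; [apply Hw|apply Rmin_l]).
           assert (Hw2 : d z w < c) by (eapply Rlt_le_trans; [apply Hw|apply Rmin_r]).
           specialize (He2 w Hw1).
           assert (g z <= d (Nat.iter k f z) (Nat.iter k f w) + g w + d w z).
           { unfold g. eapply Rle_trans; [apply (metric_triangle _ Hm _ (Nat.iter k f w))|].
             pose proof (metric_triangle _ Hm (Nat.iter k f w) w z). lra. }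
           rewrite (metric_sym _ Hm w z) in H.
           assert (/ INR (S n) < g w) by (unfold c in *; lra).
           apply (Rmult_lt_compat_r (INR (S n))) in H0; auto.
           rewrite Rinv_l in H0 by lra. exact H0.
      * intros z. destruct (Rle_or_lt (d z x) r) as [Hz|Hz].
        -- assert (Hgp : 0 < g z).
           { destruct (Rle_lt_or_eq_dec 0 (g z) (Hg0 z)); auto.
             exfalso. apply Hno. exists z. auto. }
           destruct (INR_unbounded (/ g z)) as [n Hn]. exists n. right.
           assert (INR n <= INR (S n)) by (apply le_INR; lia).
           apply (Rmult_lt_reg_l (/ g z)); [apply Rinv_0_lt_compat; auto|].
           rewrite <- Rmult_assoc, Rinv_l by lra. lra.
        -- exists 0%nat. left. auto.
      * set (N := list_max l).
        assert (HN : forall z, d z x <= r -> 1 < g z * INR (S N)).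
        { intros z Hz. destruct (Hl z) as [i [Hi Hui]].
          destruct Hui as [Hui|Hui]; [lra|].
          assert (Hi' : (i <= N)%nat).
          { pose proof (proj1 (list_max_le l N) (le_n _)) as F.
            rewrite Forall_forall in F. auto. }
          assert (INR (S i) <= INR (S N)) by (apply le_INR; lia).
          assert (g z * INR (S i) <= g z * INR (S N)) by (apply Rmult_le_compat_l; auto).
          lra. }
        assert (HSN : 0 < INR (S N)) by (apply lt_0_INR; lia).
        assert (Hr0 : 0 < r) by (unfold r; apply Rmult_lt_0_compat; lra).
        destruct (pow_lt_1_zero L ltac:(rewrite Rabs_right; lra) (/ (INR (S N) * r)))
          as [M HM].
        { apply Rinv_0_lt_compat. apply Rmult_lt_0_compat; lra. }
        specialize (HM M (le_n _)). rewrite Rabs_right in HM by (apply Rle_ge, pow_le; lra).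
        destruct (Hdesc M) as [z [Hz1 Hz2]].
        specialize (HN z Hz1).
        assert (g z * INR (S N) <= L ^ M * r * INR (S N))
          by (apply Rmult_le_compat_r; lra).
        assert (L ^ M * (INR (S N) * r) < 1).
        { apply (Rmult_lt_compat_r (INR (S N) * r)) in HM; [|apply Rmult_lt_0_compat; lra].
          rewrite Rinv_l in HM; [lra|]. apply Rgt_not_eq. apply Rmult_lt_0_compat; lra. }
        lra.
  - intros Hcl delta Hd.
    assert (Hd2 : 0 < delta / 2) by lra.
    destruct (Hc x (delta / 2) Hd2) as [eta [He1 He2]].
    destruct (Hcl (Rmin eta (delta / 2)) ltac:(apply Rmin_glb_lt; lra)) as [p [[n [Hn Hp]] Hxp]].
    assert (Hx1 : d x p < eta) by (eapply Rlt_le_trans; [apply Hxp|apply Rmin_l]).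
    assert (Hx2 : d x p < delta / 2) by (eapply Rlt_le_trans; [apply Hxp|apply Rmin_r]).
    set (xs := fun i => if Nat.eqb i 0 then x else if Nat.ltb i n then Nat.iter i f p else x).
    exists xs, n. split; [split; [lia|]|].
    + intros i Hi.
      assert (A : d (f (xs i)) (f (Nat.iter i f p)) < delta / 2).
      { unfold xs. destruct (Nat.eqb_spec i 0) as [e|e].
        - subst i. simpl. apply He2; auto.
        - apply Nat.ltb_lt in Hi. rewrite Hi.
          rewrite (proj2 (metric_eq0 _ Hm _ _)) by auto. lra. }
      assert (B : d (Nat.iter (S i) f p) (xs (S i)) < delta / 2).
      { unfold xs. simpl Nat.eqb. destruct (Nat.ltb_spec (S i) n) as [e|e].
        - rewrite (proj2 (metric_eq0 _ Hm _ _)) by auto. lra.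
        - replace (S i) with n by lia. rewrite Hp. rewrite metric_sym by auto. auto. }
      pose proof (metric_triangle _ Hm (f (xs i)) (f (Nat.iter i f p)) (xs (S i))).
      simpl in B. lra.
    + unfold xs. split; [reflexivity|].
      destruct (Nat.eqb_spec n 0); [lia|]. rewrite Nat.ltb_irrefl. reflexivity.
Qed.
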